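(* Let $n\ge1$ and $\sigma\in\mathfrak{S}_n$. Then $\Delta(\sigma')\sqsubset\Delta(\sigma)$. Moreover: if $\Delta(\sigma')$ is a prefix of $\Delta(\sigma)$, then $\sigma$ is obtained from $\sigma'$ by inserting $n$ in the last position. Otherwise, let $k$ be the index of the first step at which the paths $\Delta(\sigma')$ and $\Delta(\sigma)$ differ; if $k$ is odd, $\sigma$ is obtained from $\sigma'$ by inserting $n$ immediately after the letter $\frac{k+1}{2}$, and if $k$ is even, $\sigma$ is obtained from $\sigma'$ by inserting $n$ immediately before the letter $\frac{k}{2}$.
   Context: Permutations $\sigma\in\mathfrak{S}_n$ are written as words $\sigma_1\cdots\sigma_n$, with the conventions $\sigma_0=0$, $\sigma_{n+1}=n+1$. A value $\sigma_i$ ($1\le i\le n$) is a peak if $\sigma_{i-1}<\sigma_i>\sigma_{i+1}$, a valley if $\sigma_{i-1}>\sigma_i<\sigma_{i+1}$, a double ascent if $\sigma_{i-1}<\sigma_i<\sigma_{i+1}$, a double descent if $\sigma_{i-1}>\sigma_i>\sigma_{i+1}$. The profile $\Delta(\sigma)$ is the word $w_1\cdots w_{2n}$ over $\{\nearrow,\searrow\}$ where, for each value $j\in\{1,\dots,n\}$, $w_{2j-1}w_{2j}$ is $\nearrow\nearrow$ if $j$ is a valley, $\searrow\searrow$ if $j$ is a peak, $\nearrow\searrow$ if $j$ is a double ascent, $\searrow\nearrow$ if $j$ is a double descent; it is a Dyck path of length $2n$ (the empty permutation has the empty profile). $\sigma'\in\mathfrak{S}_{n-1}$ is the word obtained from $\sigma$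 by deleting the letter $n$. A Dyck path of length $2m$ is a lattice path from $(0,0)$ to $(2m,0)$ with steps $\nearrow=(1,1)$, $\searrow=(1,-1)$ never going below the $x$-axis; $P(x)$ denotes its height at abscissa $x$. A cell is a point $(a,b)\in\mathbb{Z}^2$ with $b\ge0$, $a+b$ even (the tilted square with vertices $(a,b),(a+1,b\pm1),(a+2,b)$). The Dyck shape of $P$ (length $2m$) is $S(P)=\{(a,b): b\ge0,\ a+b\text{ even},\ 0\le a\le 2m-2,\ b+1\le P(a+1)\}$. Cells are adjacent if they differ by $(\pm1,\pm1)$. A ribbon is a nonempty set of cells, connected for adjacency, containing no four cells $(a,b),(a+1,b+1),(a+1,b-1),(a+2,b)$. For Dyck paths $D$ of length $2m$ and $E$ of length $2m+2$, $D\sqsubset E$ means $S(D)\subseteq S(E)$ and $S(E)\setminus S(D)$ is a ribbon. *)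

(* Defs.v *)
From mathcomp Require Import all_boot all_order all_algebra.
Set Implicit Arguments. Unset Strict Implicit. Unset Printing Implicit Defensive.
Import GRing.Theory Num.Theory.

(* Permutations of {1..n} are represented as words: seq nat that are
   permutations of [:: 1; ...; n].  Convention sigma_0 = 0, sigma_{n+1} = n+1. *)
Definition is_perm_word (n : nat) (s : seq nat) : bool := perm_eq s (iota 1 n).

Definition sigma_prime (s : seq nat) : seq nat := rem (size s) s.

Definition prev_val (s : seq nat) (j : nat) : nat := nth 0 (0 :: s) (index j s).
Definition next_val (s : seq nat) (j : nat) : nat :=
  nth (size s).+1 s (index j s).+1.

Definition is_peak s j := (prev_val s j < j) && (j > next_val s j).
Definition is_valley s j := (prev_val s j > j) && (j < next_val s j).
Definition is_dasc s j := (prev_val s j < j) && (j < next_val s j).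
Definition is_ddesc s j := (prev_val s j > j) && (j > next_val s j).

(* Steps: true = up-step (1,1), false = down-step (1,-1). *)
Definition profile_steps (s : seq nat) (j : nat) : seq bool :=
  if is_valley s j then [:: true; true]
  else if is_peak s j then [:: false; false]
  else if is_dasc s j then [:: true; false]
  else [:: false; true].

Definition profile (s : seq nat) : seq bool :=
  flatten [seq profile_steps s j | j <- iota 1 (size s)].

Definition height (P : seq bool) (x : nat) : int :=
  (\sum_(i < x) (if nth false P i then 1 else -1))%R.

Definition dyck (P : seq bool) : bool :=
  [forall x : 'I_(size P).+1, (0 <= height P x)%R] && (height P (size P) == 0%R).

(* Cells (a,b) with a,b >= 0 (only such cells occur in Dyck shapes). *)
Definition cell := (nat * nat)%type.

Definition in_shape (P : seq bool) (c : cell) : bool :=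
  [&& ~~ odd (c.1 + c.2), c.1 + 2 <= size P & (c.2.+1%:Z <= height P c.1.+1)%R].

Definition adj (c d : cell) : bool :=
  ((d.1 == c.1.+1) || (c.1 == d.1.+1)) && ((d.2 == c.2.+1) || (c.2 == d.2.+1)).

Definition ribbon (R : pred cell) : Prop :=
  (exists c, R c) /\
  (forall x y, R x -> R y -> exists p : seq cell,
      [&& path adj x p, last x p == y & all R p]) /\
  (* no four cells (a,b),(a+1,b+1),(a+1,b-1),(a+2,b) *)
  (forall a b : nat,
      ~~ [&& R (a, b.+1), R (a.+1, b.+2), R (a.+1, b) & R (a.+2, b.+1)]).

Definition ribbon_sub (D E : seq bool) : Prop :=
  [/\ dyck D, dyck E, size E = (size D + 2)%N,
      (forall c, in_shape D c -> in_shape E c) &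
      ribbon (fun c => in_shape E c && ~~ in_shape D c)].

(* Main.v *)
Require Import Defs.
From mathcomp Require Import all_boot all_order all_algebra zify.
Set Implicit Arguments. Unset Strict Implicit. Unset Printing Implicit Defensive.
Import GRing.Theory Num.Theory.

Lemma height0 P : height P 0 = 0%R.
Proof. by rewrite /height big_ord0. Qed.

Lemma heightT P x : nth false P x -> height P x.+1 = (height P x + 1)%R.
Proof. by move=> H; rewrite /height big_ord_recr /= H. Qed.

Lemma heightF P x : nth false P x = false -> height P x.+1 = (height P x - 1)%R.
Proof. by move=> H; rewrite /height big_ord_recr /= H. Qed.

Lemma heightS P x : height P x.+1 = (height P x + (if nth false P x then 1 else -1))%R.
Proof. by rewrite /height big_ord_recr. Qed.

Lemma height_par P x : exists z : int, height P x = (x%:Z - 2 * z)%R.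
Proof.
elim: x => [|x [z Hz]]; first by exists 0%R; rewrite height0.
case E: (nth false P x).
  by exists z; rewrite heightT // Hz; lia.
by exists (z + 1)%R; rewrite heightF // Hz; lia.
Qed.
Set Implicit Arguments. Unset Strict Implicit. Unset Printing Implicit Defensive.
Import GRing.Theory Num.Theory.

Section Abs.
Variables (n p : nat) (D E : seq bool).
Hypotheses (sD : size D = 2 * n) (sE : size E = (2 * n).+2) (pl : p <= 2 * n)
  (Hag : forall i, i < 2 * n -> i != p -> nth false E i = nth false D i)
  (Hp : p < 2 * n -> nth false D p = false /\ nth false E p = true)
  (H2n : nth false E (2 * n) = (p == 2 * n))
  (H2n1 : nth false E (2 * n).+1 = false).

Lemma hrel x : x <= 2 * n ->
  height E x = (height D x + (if (p < x)%N then 2 else 0))%R.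
Proof.
elim: x => [|x IH] Hx; first by rewrite !height0.
have [Exp|Hxp] := eqVneq x p.
  subst x. have [HD HE] := Hp Hx.
  rewrite heightT // heightF // IH; last by lia.
  rewrite ltnn ltnSn /=. lia.
have Ha := Hag Hx Hxp.
have -> : (p < x.+1) = (p < x) by lia.
case Ed: (nth false D x).
  rewrite heightT ?Ha // heightT // IH; last by lia.
  case: (p < x); lia.
rewrite heightF ?Ha // heightF // IH; last by lia.
case: (p < x); lia.
Qed.

Lemma hE1 : height D (2 * n) = 0%R -> height E (2 * n).+1 = 1%R.
Proof.
move=> H0.
case: (ltngtP p (2 * n)) => Hc; try lia.
  rewrite heightF; last by rewrite H2n; apply/eqP; lia.
  rewrite hrel // H0 Hc. lia.
rewrite heightT; last by rewrite H2n Hc.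
rewrite hrel // H0 Hc ltnn. lia.
Qed.

Lemma hE2 : height D (2 * n) = 0%R -> height E (2 * n).+2 = 0%R.
Proof. by move=> H0; rewrite heightF // hE1 //; lia. Qed.


Lemma dyckP P : dyck P -> (forall x, x <= size P -> (0 <= height P x)%R) /\ height P (size P) = 0%R.
Proof.
case/andP=> /forallP H /eqP H0; split=> // x Hx.
by have := H (Ordinal (Hx : x < (size P).+1)).
Qed.

Lemma dyckI P : (forall x, x <= size P -> (0 <= height P x)%R) -> height P (size P) = 0%R -> dyck P.
Proof.
move=> H H0; apply/andP; split; last by apply/eqP.
apply/forallP=> x; apply: H; by have := ltn_ord x.
Qed.

Hypothesis dD : dyck D.

Let hD0 : height D (2 * n) = 0%R.
Proof. by have [_ H] := dyckP dD; rewrite -sD. Qed.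
Let hDp x : x <= 2 * n -> (0 <= height D x)%R.
Proof. by have [H _] := dyckP dD; rewrite -sD; apply: H. Qed.

Lemma dyckE : dyck E.
Proof.
apply: dyckI; last first. rewrite sE. apply: hE2. exact: hD0.
rewrite sE => x Hx.
case: (leqP x (2 * n)) => H1.
  rewrite hrel //; have := hDp H1; case: (p < x)%N; lia.
have [->|->] : x = (2 * n).+1 \/ x = (2 * n).+2 by lia.
  by rewrite hE1.
by rewrite hE2.
Qed.

Lemma shape_incl c : in_shape D c -> in_shape E c.
Proof.
case: c => a b; rewrite /in_shape /= sD sE => /and3P [H1 H2 H3].
apply/and3P; split=> //; first by lia.
rewrite hrel; last by lia.
case: (p < a.+1)%N; lia.
Qed.

Let R c := in_shape E c && ~~ in_shape D c.

Lemma Rchar a b : R (a, b) = (p <= a <= 2 * n) && (b.+1%:Z == height E a.+1)%R.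
Proof.
rewrite /R /in_shape /= sD sE.
have [z Hz] := height_par E a.+1.
apply/idP/idP.
  case/andP=> /and3P [Hod H2 H3] HnD.
  have [q Hq] : exists q, a + b = 2 * q.
    exists (a + b)./2; have := odd_double_half (a + b); rewrite (negbTE Hod) -muln2 /=; lia.
  case: (ltnP a p) => Hap.
    exfalso; move: HnD; rewrite Hod /=.
    case: (leqP (a + 2) (2 * n)) => Ha /=.
      move=> /negP; apply; move: H3; rewrite hrel; last by lia.
      have -> : (p < a.+1)%N = false by lia.
      lia.
    have Ea : a.+1 = 2 * n by lia.
    move: H3; rewrite Ea hrel // hD0; have -> : (p < 2 * n)%N = false by lia. lia.
  have Ha2 : a <= 2 * n by lia.
  apply/andP; split; first by apply/andP. apply/eqP.
  have [//|Hlt] : (b.+1%:Z = height E a.+1 \/ b.+3%:Z <= height E a.+1)%R by lia.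
  exfalso; move: HnD; rewrite Hod /=.
  case: (leqP (a + 2) (2 * n)) => Ha /=.
    move: Hlt; rewrite hrel; last by lia.
    have -> : (p < a.+1)%N by lia.
    move=> Hlt; apply/negP; rewrite negbK; lia.
  case: (ltngtP a (2 * n)) => Ea; try lia.
    have Ea' : a.+1 = 2 * n by lia.
    move: Hlt; rewrite Ea' hrel // hD0; have -> : (p < 2 * n)%N by lia. lia.
  move: Hlt; rewrite Ea hE1 //; lia.
case/andP=> /andP [Hpa Ha] /eqP Hb.
have Hnodd : ~~ odd (a + b).
  apply/negP=> Ho; have := odd_double_half (a + b); rewrite Ho -muln2 /=; lia.
rewrite Hnodd /=; apply/andP; split.
  apply/andP; split; [lia | by rewrite Hb].
apply/negP=> /andP [H2 H3]; move: H3 Hb.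
rewrite hrel; last by lia.
have -> : (p < a.+1)%N by lia.
lia.
Qed.


Lemma hEpos a : p <= a <= 2 * n -> (1 <= height E a.+1)%R.
Proof.
case/andP=> H1 H2.
case: (ltngtP a (2 * n)) => Ha; try lia.
  rewrite hrel; last by lia.
  have -> : (p < a.+1)%N by lia.
  have := hDp (_ : a.+1 <= 2 * n); lia.
by rewrite Ha hE1.
Qed.

Definition cellAt a : cell := (a, (absz (height E a.+1)).-1).

Lemma cellAt_R a : p <= a <= 2 * n -> R (cellAt a).
Proof.
move=> H; rewrite /cellAt Rchar H /=; apply/eqP.
have := hEpos H; lia.
Qed.

Lemma R_cellAt c : R c -> p <= c.1 <= 2 * n /\ c = cellAt c.1.
Proof.
case: c => a b; rewrite Rchar => /andP [H /eqP Hb]; split=> //.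
rewrite /cellAt /=; congr (_, _); lia.
Qed.

Lemma adj_step a : p <= a -> a < 2 * n ->
  adj (cellAt a) (cellAt a.+1) /\ adj (cellAt a.+1) (cellAt a).
Proof.
move=> H1 H2.
have P1 : (1 <= height E a.+1)%R by apply: hEpos; lia.
have P2 : (1 <= height E a.+2)%R by apply: hEpos; lia.
rewrite /adj /cellAt /= eqxx /= orbT /=.
case Eb: (nth false E a.+1).
  rewrite (heightT Eb); rewrite (heightT Eb) in P2.
  split; apply/orP; lia.
rewrite (heightF Eb); rewrite (heightF Eb) in P2.
split; apply/orP; lia.
Qed.

Definition conn x y := exists q, [&& path adj x q, last x q == y & all R q].

Lemma conn_trans x y z : conn x y -> conn y z -> conn x z.
Proof.
move=> [q1 /and3P [P1 /eqP L1 A1]] [q2 /and3P [P2 /eqP L2 A2]].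
exists (q1 ++ q2); rewrite cat_path last_cat L1 P1 P2 L2 all_cat A1 A2 eqxx.
by [].
Qed.

Lemma conn_step x y : adj x y -> R y -> conn x y.
Proof. by move=> A Ry; exists [:: y]; rewrite /= A Ry eqxx. Qed.

Lemma conn_chain a d : p <= a -> a + d <= 2 * n ->
  conn (cellAt a) (cellAt (a + d)) /\ conn (cellAt (a + d)) (cellAt a).
Proof.
move=> Ha; elim: d => [|d IH] Hd.
  by rewrite addn0; split; exists [::]; rewrite /= eqxx.
have [I1 I2] := IH ltac:(lia).
have [A1 A2] : adj (cellAt (a + d)) (cellAt (a + d).+1) /\ adj (cellAt (a + d).+1) (cellAt (a + d)).
  apply: adj_step; lia.
have R1 : R (cellAt (a + d).+1) by apply: cellAt_R; lia.
have R2 : R (cellAt (a + d)) by apply: cellAt_R; lia.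
rewrite addnS; split.
  exact: conn_trans I1 (conn_step A1 R1).
exact: conn_trans (conn_step A2 R2) I2.
Qed.

Lemma ribbonE : ribbon R.
Proof.
split; [|split].
- exists (cellAt (2 * n)); apply: cellAt_R; lia.
- move=> x y /R_cellAt [Hx ->] /R_cellAt [Hy ->].
  case: (leqP x.1 y.1) => Hxy.
    have := conn_chain (d := y.1 - x.1) (_ : p <= x.1) (_ : x.1 + (y.1 - x.1) <= 2 * n).
    have -> : x.1 + (y.1 - x.1) = y.1 by lia.
    by case; [lia | lia | ].
  have := conn_chain (d := x.1 - y.1) (_ : p <= y.1) (_ : y.1 + (x.1 - y.1) <= 2 * n).
  have -> : y.1 + (x.1 - y.1) = x.1 by lia.
  by case; [lia | lia | ].
- move=> a b; apply/negP => /and4P [_ H1 H2 _].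
  move: H1 H2; rewrite !Rchar => /andP [_ /eqP E1] /andP [_ /eqP E2].
  lia.
Qed.

Lemma ribbon_subE : ribbon_sub D E.
Proof.
split=> //; [exact: dyckE | by rewrite sD sE; lia | exact: shape_incl | exact: ribbonE].
Qed.

End Abs.
Set Implicit Arguments. Unset Strict Implicit. Unset Printing Implicit Defensive.

Definition ps (s : seq nat) j := [:: j < next_val s j; j < prev_val s j].

Lemma prev_cat a j b : j \notin a -> prev_val (a ++ j :: b) j = last 0 a.
Proof.
move=> H; rewrite /prev_val index_cat (negbTE H) /= eqxx addn0.
rewrite -cat_cons nth_cat /= ltnSn.
case: a {H} => [|c a] //=; by rewrite -[RHS]/(last 0 (c :: a)) -nth_last.
Qed.

Lemma next_cat a j b : j \notin a -> next_val (a ++ j :: b) j = head (size (a ++ j :: b)).+1 b.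
Proof.
move=> H; rewrite /next_val index_cat (negbTE H) /= eqxx addn0.
rewrite nth_cat ltnNge leqnSn /= subSn // subnn /=.
by case: b.
Qed.

Lemma uniq_mid (T : eqType) (a b : seq T) (j : T) : uniq (a ++ j :: b) -> j \notin a /\ j \notin b.
Proof.
by rewrite cat_uniq /= => /and3P [_ /norP [Hja _] /andP [Hjb _]].
Qed.

Lemma size_steps s j : size (profile_steps s j) = 2.
Proof. by rewrite /profile_steps; repeat case: ifP. Qed.

Lemma size_flat2 (F : nat -> seq bool) a k : (forall j, size (F j) = 2) ->
  size (flatten (map F (iota a k))) = 2 * k.
Proof.
move=> HF; elim: k a => [|k IH] a //=.
by rewrite size_cat HF IH; lia.
Qed.

Lemma nth_flat2 (F : nat -> seq bool) a k i : (forall j, size (F j) = 2) ->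
  i < 2 * k -> nth false (flatten (map F (iota a k))) i = nth false (F (a + i./2)) (odd i).
Proof.
move=> HF; elim: k a i => [|k IH] a i; first by lia.
move=> Hi /=; rewrite nth_cat HF.
case: i Hi => [|[|i]] Hi /=; rewrite ?addn0 //.
rewrite IH; last by lia.
have -> : i.+2 - 2 = i by lia.
rewrite negbK; congr (nth _ (F _) _); lia.
Qed.

Lemma size_profile s : size (profile s) = 2 * size s.
Proof. exact: size_flat2 (fun j => size_steps s j). Qed.

Lemma steps_ps s j : j != 0 -> (forall x, x \in s -> x <= size s) -> uniq s ->
  j \in s -> profile_steps s j = ps s j.
Proof.
move=> Hj0 Hle Hu /splitPr Hs; case: Hs Hle Hu => a b Hle Hu.
have [Ha Hb] := uniq_mid Hu.
have Hjle : j <= size (a ++ j :: b) by apply: Hle; rewrite mem_cat mem_head orbT.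
rewrite /ps /profile_steps /is_valley /is_peak /is_dasc /is_ddesc prev_cat // next_cat //.
have Hp : last 0 a != j.
  apply/negP=> /eqP Hl; have := mem_last 0 a; rewrite Hl inE (negbTE Ha) orbF.
  by move/eqP: Hj0 => Hj0 /eqP.
have Hn : head (size (a ++ j :: b)).+1 b != j.
  case: b Hb Hjle {Hu Hle} => [|c b] Hb Hjle /=.
    by rewrite neq_ltn ltnS Hjle orbT.
  by apply/negP=> /eqP Hc; move: Hb; rewrite -Hc mem_head.
move: Hp Hn; set P := last 0 a; set N := head _ b.
by case: (ltngtP P j); case: (ltngtP j N).
Qed.

Lemma nth_profile s i : perm_eq s (iota 1 (size s)) -> i < 2 * size s ->
  nth false (profile s) i = nth false (ps s (i./2).+1) (odd i).
Proof.
move=> Hp Hi; rewrite /profile nth_flat2 //; last exact: size_steps.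
rewrite add1n steps_ps //.
- move=> x; rewrite (perm_mem Hp) mem_iota; lia.
- by rewrite (perm_uniq Hp) iota_uniq.
- by rewrite (perm_mem Hp) mem_iota; apply/andP; split; lia.
Qed.

Section Struct.
Variables (n : nat) (u v : seq nat).
Let N := n.+1.
Let s := u ++ N :: v.
Let s' := u ++ v.
Hypothesis Hperm : perm_eq s (iota 1 N).

Lemma sz : size s = N.
Proof. by rewrite (perm_size Hperm) size_iota. Qed.

Lemma szs' : size s' = n.
Proof. by have := sz; rewrite /s /s' !size_cat /=; lia. Qed.

Lemma us : uniq s.
Proof. by rewrite (perm_uniq Hperm) iota_uniq. Qed.

Lemma mems x : (x \in s) = (1 <= x <= N).
Proof. by rewrite (perm_mem Hperm) mem_iota; congr (_ && _); lia. Qed.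

Lemma Nnot : N \notin u /\ N \notin v.
Proof. exact: uniq_mid us. Qed.

Lemma mems' x : (x \in s') = (1 <= x <= n).
Proof.
have [H1 H2] := Nnot.
have := mems x; rewrite /s /s' !mem_cat inE.
case: (eqVneq x N) => [->|Hx]; first by rewrite (negbTE H1) (negbTE H2); lia.
by rewrite /= => ->; move: Hx; rewrite /N; lia.
Qed.

Lemma us' : uniq s'.
Proof. apply: subseq_uniq (us); exact: cat_subseq (subseq_refl u) (subseq_cons v N). Qed.

Lemma perm' : perm_eq s' (iota 1 n).
Proof.
apply: uniq_perm; [exact: us' | exact: iota_uniq |].
by move=> x; rewrite mems' mem_iota; lia.
Qed.


Lemma next_cmp j : j \in s' ->
  (j < next_val s j) = if (u != [::]) && (j == last 0 u) then true else (j < next_val s' j).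
Proof.
move=> Hj; have Hjn : 1 <= j <= n by rewrite -mems'.
have Hu := us; have Hu' := us'.
rewrite /s /s' in Hj Hu Hu' *.
move: Hj; rewrite mem_cat => /orP [] Hj.
  case/splitPr: Hj Hu Hu' => a b Hu Hu'.
  rewrite -!catA !cat_cons in Hu Hu' *.
  have [Ha Hb] := uniq_mid Hu.
  rewrite !next_cat //.
  case: b Hb {Hu Hu'} => [|c b] Hb /=.
    have -> : (a ++ [:: j] != [::]) by case: a {Ha}.
    by rewrite last_cat /= eqxx; lia.
  rewrite last_cat /=.
  have -> : (j == last c b) = false.
    by apply/negP=> /eqP Hl; move: Hb; rewrite Hl mem_cat mem_last.
  by rewrite andbF.
have Hsz := szs'; rewrite /s' in Hsz.
case/splitPr: Hj Hu Hu' Hsz => a b Hu Hu' Hsz.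
have -> : u ++ N :: a ++ j :: b = (u ++ N :: a) ++ j :: b by rewrite -catA.
have -> : u ++ a ++ j :: b = (u ++ a) ++ j :: b by rewrite -catA.
have Hjs : j \notin u ++ N :: a.
  by apply: (proj1 (uniq_mid (_ : uniq ((u ++ N :: a) ++ j :: b)))); rewrite -catA.
have Hjs' : j \notin u ++ a.
  by apply: (proj1 (uniq_mid (_ : uniq ((u ++ a) ++ j :: b)))); rewrite -catA.
have -> : (u != [::]) && (j == last 0 u) = false.
  case: u Hjs {Hu Hu' Hjs'} => [|c u'] Hjs //=.
  by apply/negP=> /eqP Hl; move: Hjs; rewrite Hl mem_cat mem_last.
rewrite !next_cat //.
case: b Hsz {Hu Hu'} => [|c b] Hsz //=.
move: Hsz; rewrite !size_cat /=; lia.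
Qed.

Lemma prev_cmp j : j \in s' ->
  (j < prev_val s j) = if (v != [::]) && (j == head 0 v) then true else (j < prev_val s' j).
Proof.
move=> Hj; have Hjn : 1 <= j <= n by rewrite -mems'.
have Hu := us; have Hu' := us'.
rewrite /s /s' in Hj Hu Hu' *.
move: Hj; rewrite mem_cat => /orP [] Hj.
  case/splitPr: Hj Hu Hu' => a b Hu Hu'.
  rewrite -!catA !cat_cons in Hu Hu' *.
  have [Ha Hb] := uniq_mid Hu.
  rewrite !prev_cat //.
  have -> : (v != [::]) && (j == head 0 v) = false.
    case: v Hb {Hu Hu'} => [|c v'] Hb //=.
    apply/negP=> /eqP Hl; move: Hb; rewrite Hl !mem_cat !inE eqxx.
    by rewrite !orbT.
  by [].
case/splitPr: Hj Hu Hu' => a b Hu Hu'.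
have -> : u ++ N :: a ++ j :: b = (u ++ N :: a) ++ j :: b by rewrite -catA.
have -> : u ++ a ++ j :: b = (u ++ a) ++ j :: b by rewrite -catA.
have Hjs : j \notin u ++ N :: a.
  by apply: (proj1 (uniq_mid (_ : uniq ((u ++ N :: a) ++ j :: b)))); rewrite -catA.
rewrite !prev_cat //; last first.
  by apply: (proj1 (uniq_mid (_ : uniq ((u ++ a) ++ j :: b)))); rewrite -catA.
case: a Hjs {Hu Hu'} => [|c a] Hjs /=.
  by rewrite cats0 eqxx /=; rewrite last_cat /=; lia.
rewrite !last_cat /=.
have -> : (j == c) = false.
  by apply/negP=> /eqP Hl; move: Hjs; rewrite Hl mem_cat !inE eqxx !orbT.
by [].
Qed.


Lemma prev_y y v' : v = y :: v' -> prev_val s' y = last 0 u.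
Proof.
move=> Ev; have := us'; rewrite /s' Ev => Hu.
by rewrite prev_cat //; case: (uniq_mid Hu).
Qed.

Lemma next_x u0 x0 : u = rcons u0 x0 -> next_val s' x0 = head n.+1 v.
Proof.
move=> Eu; have := us'; have := szs'; rewrite /s' Eu cat_rcons => Hsz Hu.
by rewrite next_cat ?Hsz //; case: (uniq_mid Hu).
Qed.

Lemma yx_neq y v' u0 x0 : v = y :: v' -> u = rcons u0 x0 -> y != x0.
Proof.
move=> Ev Eu; have := us'; rewrite /s' Ev Eu cat_rcons => Hu.
have [_ H] := uniq_mid Hu; apply/eqP=> Hyx; move: H; by rewrite Hyx mem_head.
Qed.

Lemma memv y : y \in v -> 1 <= y <= n.
Proof. by move=> H; rewrite -mems' /s' mem_cat H orbT. Qed.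

Lemma memu y : y \in u -> 1 <= y <= n.
Proof. by move=> H; rewrite -mems' /s' mem_cat H. Qed.

Lemma nthE i : i < (2 * n).+2 -> nth false (profile s) i = nth false (ps s (i./2).+1) (odd i).
Proof. move=> Hi; apply: nth_profile; rewrite sz //; lia. Qed.

Lemma nthD i : i < 2 * n -> nth false (profile s') i = nth false (ps s' (i./2).+1) (odd i).
Proof. move=> Hi; apply: nth_profile; rewrite szs' //; exact: perm'. Qed.

Lemma half2 k : (2 * k)./2 = k.
Proof. by rewrite mulnC muln2 doubleK. Qed.
Lemma half2S k : (2 * k).+1./2 = k.
Proof. by rewrite mulnC muln2 /= uphalf_double. Qed.
Lemma odd2 k : odd (2 * k) = false.
Proof. by rewrite mulnC muln2 odd_double. Qed.

Definition pp := if v is y :: _ then (if y < last 0 u then 2 * last 0 u - 2 else 2 * y - 1) else 2 * n.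

Lemma half_facts i : i = odd i + 2 * i./2.
Proof. by rewrite {1}(esym (odd_double_half i)) -muln2 mulnC. Qed.

Lemma pp_le : pp <= 2 * n.
Proof.
rewrite /pp; case Ev: v => [|y v'] //.
have Hy : 1 <= y <= n by apply: memv; rewrite Ev mem_head.
case: ifP => H; last by lia.
case/lastP Eu: u => [|u0 x0]; first by rewrite /= in H.
have Hx : 1 <= x0 <= n by apply: memu; rewrite Eu mem_rcons mem_head.
rewrite last_rcons; lia.
Qed.

Lemma agree i : i < 2 * n -> i != pp -> nth false (profile s) i = nth false (profile s') i.
Proof.
move=> Hi Hip; rewrite nthE; last by lia.
rewrite nthD //.
have Hh := half_facts i.
have Hj : (i./2).+1 \in s' by rewrite mems'; lia.
case Ho: (odd i) Hh => /= Hh.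
  rewrite prev_cmp //.
  move: Hip; rewrite /pp; case Ev: v => [|y v'] //= Hip.
  case: eqP => // Ejy /=.
  rewrite Ejy (prev_y Ev); case: ifP Hip => // Hyx Hip.
  exfalso; move/eqP: Hip; apply; lia.
rewrite next_cmp //.
move: Hip; rewrite /pp.
case/lastP Eu: u => [|u0 x0] //= Hip.
have -> : (rcons u0 x0 != [::]) by rewrite -size_eq0 size_rcons.
rewrite last_rcons; case: (eqVneq (i./2).+1 x0) => Ejx /=; last by [].
rewrite Ejx (next_x Eu).
move: Hip; case Ev: v => [|y v'] /= Hip.
  have : x0 \in s' by rewrite /s' Eu mem_cat mem_rcons mem_head.
  by rewrite mems'; lia.
have Hne := yx_neq Ev Eu.
case: ifP Hip => Hyx Hip.
  exfalso; move/eqP: Hip; apply; rewrite last_rcons; lia.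
rewrite last_rcons in Hyx; move/eqP: Hne; lia.
Qed.

Lemma at_p : pp < 2 * n -> nth false (profile s') pp = false /\ nth false (profile s) pp = true.
Proof.
rewrite /pp; case Ev: v => [|y v']; first by rewrite ltnn.
have Hy : 1 <= y <= n by apply: memv; rewrite Ev mem_head.
case: ifP => Hyx Hp.
  case/lastP Eu: u Hyx Hp => [|u0 x0]; first by [].
  rewrite last_rcons => Hyx Hp.
  have Hx : 1 <= x0 <= n by apply: memu; rewrite Eu mem_rcons mem_head.
  have Hxs : x0 \in s' by rewrite mems'.
  have E2 : 2 * x0 - 2 = 2 * x0.-1 by lia.
  have Hh : (2 * x0 - 2)./2 = x0.-1 by rewrite E2 half2.
  have Ho : odd (2 * x0 - 2) = false by rewrite E2 odd2.
  rewrite nthD // nthE; last by lia.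
  rewrite Hh Ho /= prednK; last by lia.
  rewrite next_cmp // Eu last_rcons eqxx.
  have -> : (rcons u0 x0 != [::]) by rewrite -size_eq0 size_rcons.
  rewrite (next_x Eu) Ev /=; split=> //; lia.
have E2 : 2 * y - 1 = (2 * y.-1).+1 by lia.
have Hh : (2 * y - 1)./2 = y.-1 by rewrite E2 half2S.
have Ho : odd (2 * y - 1) by rewrite E2 /= odd2.
have Hys : y \in s' by rewrite mems'.
rewrite nthD // nthE; last by lia.
rewrite Hh Ho /= prednK; last by lia.
rewrite prev_cmp // Ev /= eqxx (prev_y Ev) Hyx; split=> //.
Qed.

Lemma at_2n : nth false (profile s) (2 * n) = (pp == 2 * n).
Proof.
have [H1 H2] := Nnot.
rewrite nthE; last by lia.
rewrite half2 odd2 [nth _ _ 0]/= next_cat // sz /pp.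
case Ev: v => [|y v']; first by rewrite eqxx /=; lia.
have Hy : 1 <= y <= n by apply: memv; rewrite Ev mem_head.
rewrite [head _ _]/=.
have -> : n.+1 < y = false by lia.
apply/esym/negP => /eqP; case: ifP => _; last by lia.
case/lastP Eu: u => [|u0 x0]; first by rewrite /=; lia.
have Hx : 1 <= x0 <= n by apply: memu; rewrite Eu mem_rcons mem_head.
rewrite last_rcons; lia.
Qed.

Lemma at_2n1 : nth false (profile s) (2 * n).+1 = false.
Proof.
have [H1 H2] := Nnot.
rewrite nthE; last by lia.
rewrite half2S.
have -> : odd (2 * n).+1 by rewrite /= odd2.
rewrite /= prev_cat //.
case/lastP Eu: u => [|u0 x0] //=.
have Hx : 1 <= x0 <= n by apply: memu; rewrite Eu mem_rcons mem_head.
rewrite last_rcons; lia.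
Qed.

End Struct.
Set Implicit Arguments. Unset Strict Implicit. Unset Printing Implicit Defensive.

Lemma rem_mid (x : nat) u v : x \notin u -> rem x (u ++ x :: v) = u ++ v.
Proof.
elim: u => [|c u IH] /=; first by rewrite eqxx.
rewrite inE negb_or => /andP [H1 H2].
by rewrite eq_sym (negbTE H1) IH.
Qed.

Lemma step n u v : perm_eq (u ++ n.+1 :: v) (iota 1 n.+1) -> dyck (profile (u ++ v)) ->
  ribbon_sub (profile (u ++ v)) (profile (u ++ n.+1 :: v)).
Proof.
move=> Hp dD.
apply: (ribbon_subE (n := n) (p := pp n u v)) => //.
- by rewrite size_profile (szs' Hp).
- by rewrite size_profile (sz Hp); lia.
- exact: pp_le.
- move=> i Hi Hip; exact: agree.
- exact: at_p.
- exact: at_2n.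
- exact: at_2n1.
Qed.

Lemma dyck_profile n s : perm_eq s (iota 1 n) -> dyck (profile s).
Proof.
elim: n s => [|n IH] s Hp.
  have : size s = 0 by rewrite (perm_size Hp).
  move/size0nil => ->.
  apply: dyckI; last by rewrite height0.
  move=> x Hx; have -> : x = 0 by move: Hx; rewrite leqn0 => /eqP.
  by rewrite height0.
have : n.+1 \in s by rewrite (perm_mem Hp) mem_iota; lia.
move=> Hm; case/splitPr: Hm Hp => u v Hp.
by have [] := step Hp (IH _ (perm' Hp)).
Qed.

Lemma pp_lt n u v : perm_eq (u ++ n.+1 :: v) (iota 1 n.+1) -> v != [::] -> pp n u v < 2 * n.
Proof.
move=> Hp; rewrite /pp; case Ev: v => [|y v'] // _.
have Hy : 1 <= y <= n by apply: (memv Hp); rewrite Ev mem_head.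
case: ifP => H; last by lia.
case/lastP Eu: u H => [|u0 x0] H; first by [].
have Hx : 1 <= x0 <= n by apply: (memu Hp); rewrite Eu mem_rcons mem_head.
rewrite last_rcons; lia.
Qed.

Theorem mainTheorem6 (n : nat) (s : seq nat) :
  (1 <= n)%N -> is_perm_word n s ->
  ribbon_sub (profile (sigma_prime s)) (profile s) /\
  (prefix (profile (sigma_prime s)) (profile s) -> s = rcons (sigma_prime s) n) /\
  (forall k : nat,
     (1 <= k <= size (profile (sigma_prime s)))%N ->
     (forall i : nat, (i < k.-1)%N ->
        nth false (profile (sigma_prime s)) i = nth false (profile s) i) ->
     nth false (profile (sigma_prime s)) k.-1 != nth false (profile s) k.-1 ->
     (odd k -> exists u v : seq nat,
        sigma_prime s = u ++ k.+1./2 :: v /\ s = u ++ k.+1./2 :: n :: v) /\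
     (~~ odd k -> exists u v : seq nat,
        sigma_prime s = u ++ k./2 :: v /\ s = u ++ n :: k./2 :: v)).
Proof.
case: n => [//|n] _ Hp; rewrite /is_perm_word in Hp.
have : n.+1 \in s by rewrite (perm_mem Hp) mem_iota; lia.
move=> Hm; case/splitPr: Hm Hp => u v Hp.
have [HNu HNv] := Nnot Hp.
rewrite /sigma_prime (sz Hp) rem_mid //.
have dD := dyck_profile (perm' Hp).
split; first exact: step.
split.
  move/prefixP => [w Ew].
  case Ev: v => [|y v']; first by rewrite cats0 cats1.
  have Hlt : pp n u v < 2 * n by apply: (pp_lt Hp); rewrite Ev.
  have [H1 H2] := at_p Hp Hlt.
  move: H2; rewrite Ew nth_cat size_profile (szs' Hp) Hlt H1.
  by [].
move=> k Hk Hagr Hdiff.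
rewrite size_profile (szs' Hp) in Hk.
have Ekp : k.-1 = pp n u v.
  apply/eqP; apply/negPn/negP => Hne.
  by move: Hdiff; rewrite (agree Hp _ Hne) ?eqxx //; lia.
have Hv : v != [::].
  apply/negP => /eqP Ev; move: Ekp; rewrite /pp Ev; lia.
move: Ekp; rewrite /pp; case Ev: v Hv => [|y v'] // _.
case: ifP => Hyx Ekp.
  case/lastP Eu: u Hyx Ekp => [|u0 x0]; first by [].
  rewrite last_rcons => Hyx Ekp.
  have Hx : 1 <= x0 by move: Hyx; lia.
  have Ek : k = (2 * x0.-1).+1 by lia.
  split=> Ho; last by move: Ho; rewrite Ek /= odd2.
  have Ek1 : k.+1 = 2 * x0 by lia.
  rewrite Ek1 half2.
  by exists u0, (y :: v'); rewrite !cat_rcons.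
have Hy : 1 <= y by apply: (proj1 (andP (memv Hp (_ : y \in v)))); rewrite Ev mem_head.
have Ek : k = 2 * y by lia.
split=> Ho; first by move: Ho; rewrite Ek odd2.
have -> : k./2 = y by rewrite Ek half2.
by exists u, v'.
Qed.
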